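(* Let $R$ be a commutative ring with $1\neq 0$, $S\subseteq R$ a multiplicatively closed subset, and $M$ an $S$-comultiplication $R$-module. If $N$ is an $S$-copure submodule of $M$, then for every $s\in S$ the module $M/sN$ is an $S$-comultiplication $R$-module.
   Context: All rings are commutative with $1\neq 0$ and all modules are unital. A multiplicatively closed subset (m.c.s.) $S$ of $R$ is a subset with $0\notin S$, $1\in S$, and $ss'\in S$ for all $s,s'\in S$. For an ideal $I$ and submodule $L$, $(L:_M I)=\{m\in M: Im\subseteq L\}$ and $(0:_M I)=\{m\in M: Im=0\}$. $M$ is an $S$-comultiplication module if for each submodule $N$ of $M$ there exist $s\in S$ and an ideal $I$ of $R$ with $s(0:_M I)\subseteq N\subseteq (0:_M I)$. A submodule $L$ of $M$ is $S$-copure if there exists $s\in S$ such that $s(L:_M I)\subseteq L+(0:_M I)$ for every ideal $I$ of $R$. *)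

(* Defs.v *)
From HB Require Import structures.
From mathcomp Require Import all_boot all_order all_algebra.
Set Implicit Arguments. Unset Strict Implicit. Unset Printing Implicit Defensive.
Import GRing.Theory.
Local Open Scope ring_scope.

Section Defs.
Variable R : comNzRingType.

Definition mcs (S : R -> Prop) : Prop :=
  ~ S 0 /\ S 1 /\ (forall s t, S s -> S t -> S (s * t)).

Definition is_ideal (I : R -> Prop) : Prop :=
  I 0 /\ (forall a b, I a -> I b -> I (a + b)) /\ (forall r a, I a -> I (r * a)).

Variable M : lmodType R.

Definition is_submodule (N : M -> Prop) : Prop :=
  N 0 /\ (forall x y, N x -> N y -> N (x + y)) /\ (forall r x, N x -> N (r *: x)).

Definition annM (I : R -> Prop) : M -> Prop :=
  fun m => forall a, I a -> a *: m = 0.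

Definition colonM (L : M -> Prop) (I : R -> Prop) : M -> Prop :=
  fun m => forall a, I a -> L (a *: m).

Definition smulS (s : R) (N : M -> Prop) : M -> Prop :=
  fun m => exists n, N n /\ m = s *: n.

Definition addS (L K : M -> Prop) : M -> Prop :=
  fun m => exists l k, L l /\ K k /\ m = l + k.

Definition S_comultiplication (S : R -> Prop) : Prop :=
  forall N, is_submodule N ->
    exists s, S s /\ exists I, is_ideal I /\
      (forall m, annM I m -> N (s *: m)) /\ (forall m, N m -> annM I m).

Definition S_copure (S : R -> Prop) (L : M -> Prop) : Prop :=
  is_submodule L /\
  exists s, S s /\ forall I, is_ideal I ->
    forall m, colonM L I m -> addS L (annM I) (s *: m).

End Defs.

(* Main.v *)
Require Import Defs.
From HB Require Import structures.
From mathcomp Require Import all_boot all_order all_algebra.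
Local Open Scope ring_scope.
Import GRing.Theory.

Theorem theorem3p4 (R : comNzRingType) (S : R -> Prop) (M : lmodType R)
    (N : M -> Prop) :
  mcs S -> @S_comultiplication R M S ->
  S_copure S N ->
  forall s, S s ->
  forall (Q : lmodType R) (f : {linear M -> Q}),
    (forall q : Q, exists m : M, f m = q) ->
    (forall m : M, f m = 0 <-> smulS s N m) ->
    @S_comultiplication R Q S.
Proof.
move=> [_ [_ Smul]] Hcom [[N0 [ND NZ]] [s' [Ss' Hcp]]] s Ss Q f fsurj fker K [K0 [KD KZ]].
have HK' : is_submodule (fun m => K (f m)).
  split; first by rewrite raddf0.
  split; first by move=> x y Hx Hy; rewrite raddfD; apply: KD.
  by move=> r x Hx; rewrite linearZ; apply: KZ.
have [t [St [I [HI [H1 H2]]]]] := Hcom _ HK'.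
exists (s * s' * t); split; first exact: (Smul _ _ (Smul _ _ Ss Ss') St).
exists I; split => //; split.
- move=> q Hq; have [m fm] := fsurj q.
  have Hm : colonM N I m.
    move=> a Ia; have : f (a *: m) = 0 by rewrite linearZ fm; apply: Hq.
    by move/fker=> [n [Nn ->]]; apply: NZ.
  have [l [k [Nl [Ak E]]]] := Hcp I HI m Hm.
  have Kk : K (f (t *: k)) by apply: H1.
  have -> : (s * s' * t) *: q = f ((s * t) *: l) + s *: f (t *: k).
    have E2 : (s * s' * t) *: m = (s * t) *: l + s *: (t *: k).
      rewrite [s *: (t *: k)]scalerA -scalerDr -E scalerA; congr (_ *: _).
      by rewrite mulrAC.
    by rewrite -fm -linearZ E2 raddfD [X in _ + X]linearZ.
  have -> : f ((s * t) *: l) = 0.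
    by apply/fker; exists (t *: l); split; [apply: NZ | rewrite scalerA].
  by rewrite add0r; apply: KZ.
- move=> q Kq; have [m fm] := fsurj q.
  have : annM I m by apply: H2; rewrite fm.
  by move=> Am a Ia; rewrite -fm -linearZ Am // raddf0.
Qed.
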